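(* Let $S\subseteq\{0,1,\dots,\omega\}$ and $\alpha\in\{0,1,\dots,\omega\}\setminus S$. Every RC$_S$-model $(W,(R_\beta)_{\beta\in S},v)$ can be expanded, by adding a suitable relation $R_\alpha$ on $W$ (keeping $W$, the relations $R_\beta$ and the valuation $v$ unchanged), to an RC$_{S\cup\{\alpha\}}$-model.
   Context: A Kripke model for signature $S$: nonempty $W$, relations $(R_\beta)_{\beta\in S}$, valuation. An RC$_S$-frame satisfies, for all $\beta,\gamma\in S$: $R_\beta R_\gamma\subseteq R_{\min(\beta,\gamma)}$ (polytransitivity); if $\beta>\gamma$ then $xR_\beta y$ and $xR_\gamma z$ imply $yR_\gamma z$ (condition J); and $R_\beta\subseteq R_\gamma$ whenever $\gamma<\beta$ (monotonicity). An RC$_S$-model is a Kripke model on an RC$_S$-frame. *)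

(* Defs.v *)
From Stdlib Require Import Arith.

Inductive idx : Type :=
| Fin : nat -> idx
| Omega : idx.

Definition idx_lt (a b : idx) : Prop :=
  match a, b with
  | Fin n, Fin m => n < m
  | Fin _, Omega => True
  | Omega, _ => False
  end.

Definition idx_min (a b : idx) : idx :=
  match a, b with
  | Fin n, Fin m => Fin (Nat.min n m)
  | Fin n, Omega => Fin n
  | Omega, b => b
  end.

Definition idx_eq_dec (a b : idx) : {a = b} + {a <> b}.
Proof. decide equality; apply Nat.eq_dec. Defined.

Definition RCframe (S : idx -> Prop) (W : Type) (R : idx -> W -> W -> Prop) : Prop :=
  (forall b g, S b -> S g -> forall x y z, R b x y -> R g y z -> R (idx_min b g) x z) /\
  (forall b g, S b -> S g -> idx_lt g b ->
     forall x y z, R b x y -> R g x z -> R g y z) /\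
  (forall b g, S b -> S g -> idx_lt g b -> forall x y, R b x y -> R g x y).

Definition RCmodel (S : idx -> Prop) (W : Type) (R : idx -> W -> W -> Prop)
  (v : nat -> W -> Prop) : Prop :=
  inhabited W /\ RCframe S W R.

Definition expand (W : Type) (R : idx -> W -> W -> Prop) (a : idx)
  (Ra : W -> W -> Prop) : idx -> W -> W -> Prop :=
  fun b => if idx_eq_dec b a then Ra else R b.

(* Main.v *)
Require Import Defs.
From Stdlib Require Import Arith Lia Classical.

Lemma lt_trans' a b c : idx_lt a b -> idx_lt b c -> idx_lt a c.
Proof. destruct a, b, c; simpl; intuition lia. Qed.
Lemma lt_irr a : ~ idx_lt a a.
Proof. destruct a; simpl; lia. Qed.
Lemma lt_tri a b : idx_lt a b \/ a = b \/ idx_lt b a.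
Proof.
  destruct a as [n|], b as [m|]; simpl; auto.
  destruct (lt_eq_lt_dec n m) as [[H|H]|H]; subst; auto.
Qed.
Lemma min_id a : idx_min a a = a.
Proof. destruct a; simpl; auto; rewrite Nat.min_id; auto. Qed.
Lemma min_l a b : idx_lt a b -> idx_min a b = a.
Proof. destruct a as [n|], b as [m|]; simpl; intros; try tauto; auto.
  f_equal; lia. Qed.
Lemma min_r a b : idx_lt a b -> idx_min b a = a.
Proof. destruct a as [n|], b as [m|]; simpl; intros; try tauto; auto.
  f_equal; lia. Qed.

Theorem lemma4p4 (S : idx -> Prop) (a : idx) (ha : ~ S a)
  (W : Type) (R : idx -> W -> W -> Prop) (v : nat -> W -> Prop) :
  RCmodel S W R v ->
  exists Ra : W -> W -> Prop,
    RCmodel (fun b => S b \/ b = a) W (expand W R a Ra) v.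
Proof.
  intros [Hinh [Hp [HJ Hm]]].
  set (Ra := fun x y : W =>
    (forall g, S g -> idx_lt g a -> R g x y) /\
    (forall g, S g -> idx_lt g a ->
       (forall g', S g' -> idx_lt g' a -> ~ idx_lt g g') ->
       forall z, R g x z -> R g y z)).
  exists Ra. split; [exact Hinh|].
  assert (EA : expand W R a Ra a = Ra).
  { unfold expand; destruct (idx_eq_dec a a); congruence. }
  assert (ES : forall b, S b -> expand W R a Ra b = R b).
  { intros b Hb; unfold expand; destruct (idx_eq_dec b a); subst; tauto. }
  assert (Mup : forall b, S b -> idx_lt a b -> forall x y, R b x y -> Ra x y).
  { intros b Hb Hab x y H; split.
    - intros g Hg Hga. apply (Hm b g); auto. eapply lt_trans'; eauto.
    - intros g Hg Hga _ z Hz. apply (HJ b g Hb Hg (lt_trans' _ _ _ Hga Hab) x); auto. }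
  assert (Rtr : forall x y z, Ra x y -> Ra y z -> Ra x z).
  { intros x y z [A1 A2] [B1 B2]; split.
    - intros g Hg Hga. rewrite <- (min_id g). apply (Hp g g Hg Hg x y z); auto.
    - intros g Hg Hga Hmax u Hu. apply B2; auto; apply A2; auto. }
  assert (Rdown : forall g, S g -> idx_lt g a -> forall x y, Ra x y -> R g x y).
  { intros g Hg Hga x y [A _]; auto. }
  assert (Hmc : forall b g, idx_min b g = b \/ idx_min b g = g).
  { intros [n|] [m|]; simpl; auto.
    destruct (Nat.min_spec n m) as [[_ ->]|[_ ->]]; auto. }
  repeat split.
  - intros b g Hb Hg x y z H1 H2.
    destruct Hb as [Hb| ->]; destruct Hg as [Hg| ->].
    + rewrite ES in H1 by auto. rewrite ES in H2 by auto.
      destruct (Hmc b g) as [E|E]; rewrite E in *; rewrite ES by auto;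
        rewrite <- E; eauto.
    + rewrite ES in H1 by auto. rewrite EA in H2.
      destruct (lt_tri b a) as [L|[L|L]]; [|subst; tauto|].
      * rewrite (min_l _ _ L), ES by auto. rewrite <- (min_id b).
        apply (Hp b b Hb Hb x y z); auto.
      * rewrite (min_r _ _ L), EA. eauto.
    + rewrite ES in H2 by auto. rewrite EA in H1.
      destruct (lt_tri g a) as [L|[L|L]]; [|subst; tauto|].
      * rewrite (min_r _ _ L), ES by auto. rewrite <- (min_id g).
        apply (Hp g g Hg Hg x y z); auto.
      * rewrite (min_l _ _ L), EA. eauto.
    + rewrite min_id, EA in *. eauto.
  - intros b g Hb Hg Hgb x y z H1 H2.
    destruct Hb as [Hb| ->]; destruct Hg as [Hg| ->].
    + rewrite ES in * by auto. eauto.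
    + rewrite ES in H1 by auto. rewrite EA in *.
      destruct H2 as [A1 A2]. split.
      * intros g' Hg' Hga. apply (HJ b g' Hb Hg' (lt_trans' _ _ _ Hga Hgb) x); auto.
      * intros g' Hg' Hga Hmax u Hu. apply A2; auto.
        rewrite <- (min_id g'). apply (Hp g' g' Hg' Hg' x y u); auto.
        apply (Hm b g'); auto. eapply lt_trans'; eauto.
    + rewrite EA in H1. rewrite ES in * by auto.
      destruct (classic (exists g', S g' /\ idx_lt g' a /\ idx_lt g g')) as [[g' [Hg' [L1 L2]]]|N].
      * apply (HJ g' g Hg' Hg L2 x); auto.
      * destruct H1 as [_ A2]. apply (A2 g Hg Hgb); auto.
        intros g' Hg' L1 L2. apply N; eauto.
    + exfalso; eapply lt_irr; eauto.
  - intros b g Hb Hg Hgb x y H1.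
    destruct Hb as [Hb| ->]; destruct Hg as [Hg| ->].
    + rewrite ES in * by auto. eauto.
    + rewrite ES in H1 by auto. rewrite EA. eauto.
    + rewrite EA in H1. rewrite ES by auto. eauto.
    + exfalso; eapply lt_irr; eauto.
Qed.
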